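(* Let $(\Omega,\nu)$ be an atomless Borel probability space. Suppose that $(W_n)_{n}$ is a sequence of graphons $W_n:\Omega^2\to[0,1]$ converging to a graphon $W:\Omega^2\to[0,1]$ in the cut-norm, i.e. $\|W_n-W\|_\square\to0$. Let $U:\Omega^2\to[0,1]$ be an arbitrary graphon with $U\le W$ (pointwise). Then there exists a sequence of graphons $(U_n)_n$ with $U_n\le W_n$ for every $n$ such that $\|U_n-U\|_\square\to0$.
   Context: A graphon on $\Omega$ is a symmetric measurable function $\Omega^2\to[0,1]$. For a bounded measurable symmetric $V:\Omega^2\to\mathbb{R}$, the cut-norm is $\|V\|_\square=\sup_{A,B\subset\Omega}\left|\int_{A\times B}V\,\mathrm{d}\nu^2\right|$, the supremum over measurable sets. *)

(* Defs.v *)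
From HB Require Import structures.
From mathcomp Require Import all_boot all_order all_algebra.
From mathcomp Require Import all_classical all_reals all_analysis.
Set Implicit Arguments. Unset Strict Implicit. Unset Printing Implicit Defensive.
Import Order.TTheory GRing.Theory Num.Theory.
Local Open Scope classical_set_scope.
Local Open Scope ring_scope.

(* A Borel space (Janson's convention): a measurable space isomorphic to a
   Borel subset of [0,1], i.e. there is an injective measurable map into
   [0,1] whose image is Borel and which maps measurable sets to measurable
   (Borel) sets (so its inverse on the image is measurable). *)
Definition borel_space d (T : measurableType d) (R : realType) : Prop :=
  exists f : T -> R,
    [/\ injective f, measurable_fun setT f,
        range f `<=` `[0%R, 1%R]%classic, measurable (range f)
      & forall A : set T, measurable A -> measurable (f @` A)].

Definition atomless d (T : measurableType d) (R : realType)
    (mu : set T -> \bar R) : Prop :=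
  forall A : set T, measurable A -> (0 < mu A)%E ->
    exists2 B : set T, measurable B /\ B `<=` A & (0 < mu B < mu A)%E.

Definition graphon d (T : measurableType d) (R : realType)
    (W : T * T -> R) : Prop :=
  [/\ measurable_fun setT W,
      forall x y, W (x, y) = W (y, x)
    & forall z, 0 <= W z <= 1].

Definition cutnorm d (T : measurableType d) (R : realType)
    (mu : set T -> \bar R) (V : T * T -> R) : \bar R :=
  ereal_sup [set x | exists A B : set T, [/\ measurable A, measurable B &
     x = `| \int[(mu \x mu)%E]_(z in A `*` B) (V z)%:E |%E]].

(* Main.v *)
Require Import Defs.
From HB Require Import structures.
From mathcomp Require Import all_boot all_order all_algebra.
From mathcomp Require Import all_classical all_reals all_analysis.
From mathcomp Require Import measurable_realfun lra.
Import Order.TTheory GRing.Theory Num.Theory.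
Local Open Scope classical_set_scope.
Local Open Scope ring_scope.
Set Implicit Arguments. Unset Strict Implicit. Unset Printing Implicit Defensive.

Lemma measurable_inv (R : realType) : measurable_fun [set: R] (@GRing.inv R).
Proof.
have -> : [set: R] = ~` [set 0] `|` [set 0] by rewrite setvU.
have mC : measurable (~` [set (0:R)]) by apply: measurableC; exact: measurable_set1.
apply/(measurable_funU _ mC (measurable_set1 0)); split.
  apply: measurable_realfun.open_continuous_measurable_fun.
    by rewrite openC; exact: closed_eq.
  by move=> x /set_mem /eqP x0; exact: inv_continuous.
move=> _ B mB; rewrite (_ : _ `&` _ = if (0 : R)^-1 \in B then [set 0] else set0).
  by case: ifP => _ //; exact: measurable_set1.
apply/seteqP; split => [x /= [-> B0]|x]; first by rewrite mem_set.
by case: ifPn => // /set_mem B0 /= ->.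
Qed.

Definition bm dX (X : measurableType dX) (R : realType) (F : X -> R) :=
  measurable_fun setT F /\ exists c : R, forall x, `|F x| <= c.

Lemma bm_integrable dX (X : measurableType dX) (R : realType)
  (P : probability X R) (F : X -> R) (A : set X) :
  measurable A -> bm F -> P.-integrable A (EFin \o F).
Proof.
move=> mA [mF [c Fc]]; apply: measurable_bounded_integrable => //.
- by rewrite (le_lt_trans (probability_le1 _ mA)) // ltry.
- exact: measurable_funS mF.
- exists c; split; first exact: num_real.
  by move=> r cr x _; apply: le_trans (Fc x) (ltW cr).
Qed.

Lemma absJ_leP dX (X : measurableType dX) (R : realType)
  (P : probability X R) (F : X -> R) (A : set X) (e : R) :
  measurable A -> measurable_fun setT F -> 0 <= e -> (forall x, `|F x| <= e) ->
  (`|\int[P]_(x in A) (F x)%:E| <= e%:E * P A)%E.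
Proof.
move=> mA mF e0 Fe.
have mF' : measurable_fun A (fun x => (F x)%:E).
  by apply/measurable_EFinP; exact: measurable_funS mF.
apply: le_trans (le_abse_integral _ mA mF') _.
have ae : {ae P, forall x, A x -> (`|(F x)%:E| <= e%:E)%E}.
  by apply: aeW => x _; rewrite /= lee_fin.
by apply: integral_le_bound.
Qed.

Lemma absJ_le dX (X : measurableType dX) (R : realType)
  (P : probability X R) (F : X -> R) (A : set X) (e : R) :
  measurable A -> measurable_fun setT F -> 0 <= e -> (forall x, `|F x| <= e) ->
  (`|\int[P]_(x in A) (F x)%:E| <= e%:E)%E.
Proof.
move=> mA mF e0 Fe.
have mF' : measurable_fun A (fun x => (F x)%:E).
  by apply/measurable_EFinP; exact: measurable_funS mF.
apply: le_trans (le_abse_integral _ mA mF') _.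
have ae : {ae P, forall x, A x -> (`|(F x)%:E| <= e%:E)%E}.
  by apply: aeW => x _; rewrite /= lee_fin.
have H : (\int[P]_(x in A) `|(F x)%:E| <= e%:E * P A)%E.
  by apply: integral_le_bound.
apply: le_trans H _.
rewrite -[leRHS]mule1; apply: lee_wpmul2l => //.
exact: probability_le1.
Qed.

Definition cut dX (X : measurableType dX) (R : realType)
  (P : set (X * X) -> \bar R) (V : X * X -> R) : \bar R :=
  ereal_sup [set x | exists A B : set X, [/\ measurable A, measurable B &
     x = `| \int[P]_(z in A `*` B) (V z)%:E |%E]].

Lemma cut_ub dX (X : measurableType dX) (R : realType)
  (P : set (X * X) -> \bar R) (V : X * X -> R) A B :
  measurable A -> measurable B ->
  (`| \int[P]_(z in A `*` B) (V z)%:E | <= cut P V)%E.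
Proof. by move=> mA mB; apply: ereal_sup_ubound; exists A, B. Qed.

Lemma cut_ge0 dX (X : measurableType dX) (R : realType)
  (P : set (X * X) -> \bar R) (V : X * X -> R) : (0 <= cut P V)%E.
Proof. exact: le_trans (abse_ge0 _) (cut_ub P V measurable0 measurable0). Qed.

Lemma cut_le dX (X : measurableType dX) (R : realType)
  (P : probability (X * X)%type R) (V : X * X -> R) e :
  measurable_fun setT V -> 0 <= e -> (forall z, `|V z| <= e) ->
  (cut P V <= e%:E)%E.
Proof.
move=> mV e0 Ve; apply: ge_ereal_sup => _ [A [B [mA mB ->]]].
by apply: absJ_le => //; exact: measurableX.
Qed.

Lemma cut_add dX (X : measurableType dX) (R : realType)
  (P : probability (X * X)%type R) (F G : X * X -> R) :
  bm F -> bm G -> (cut P (fun z => (F z + G z)%R) <= cut P F + cut P G)%E.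
Proof.
move=> bF bG; apply: ge_ereal_sup => _ [A [B [mA mB ->]]].
have mAB : measurable (A `*` B) by exact: measurableX.
under eq_integral do rewrite EFinD.
rewrite integralD //; try exact: bm_integrable.
apply: le_trans (lee_abs_add _ _) _.
by apply: leeD; exact: cut_ub.
Qed.

Lemma cut_scale dX (X : measurableType dX) (R : realType)
  (P : probability (X * X)%type R) (F : X * X -> R) (k : R) :
  bm F -> (cut P (fun z => (k * F z)%R) <= `|k|%:E * cut P F)%E.
Proof.
move=> bF; apply: ge_ereal_sup => _ [A [B [mA mB ->]]].
have mAB : measurable (A `*` B) by exact: measurableX.
under eq_integral do rewrite EFinM.
rewrite integralZl //; last exact: bm_integrable.
rewrite abseM /=; apply: lee_wpmul2l => //.
exact: cut_ub.
Qed.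

Lemma int_indic dX (X : measurableType dX) (R : realType)
  (P : {measure set X -> \bar R}) (S D : set X) (V : X -> R) :
  (\int[P]_(z in S) (\1_D z * V z)%:E = \int[P]_(z in S `&` D) (V z)%:E)%E.
Proof.
rewrite integral_mkcondr; apply: eq_integral => z _.
rewrite /patch indicE; case: ifP => _; by rewrite ?mul1r ?mul0r.
Qed.

Lemma cut_indic_le dX (X : measurableType dX) (R : realType)
  (P : probability (X * X)%type R) (D : set (X * X)) (V : X * X -> R) :
  measurable D -> measurable_fun setT V -> (forall z, `|V z| <= 1) ->
  (cut P (fun z => (\1_D z * V z)%R) <= P D)%E.
Proof.
move=> mD mV V1; apply: ge_ereal_sup => _ [A [B [mA mB ->]]].
rewrite int_indic.
have mS : measurable (A `*` B `&` D) by apply: measurableI => //; exact: measurableX.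
apply: le_trans (absJ_leP P mS mV ler01 V1) _.
by rewrite mul1e; apply: le_measure => //; rewrite inE.
Qed.

Lemma cut_rect dX (X : measurableType dX) (R : realType)
  (P : probability (X * X)%type R) (A0 B0 : set X) (V : X * X -> R) :
  measurable A0 -> measurable B0 ->
  (cut P (fun z => (\1_(A0 `*` B0) z * V z)%R) <= cut P V)%E.
Proof.
move=> mA0 mB0; apply: ge_ereal_sup => _ [A [B [mA mB ->]]].
rewrite int_indic -setXI; apply: cut_ub; exact: measurableI.
Qed.

Definition tends0 (R : realType) (f : nat -> \bar R) :=
  forall e : R, 0 < e -> \forall n \near \oo, (f n <= e%:E)%E.

Lemma cvg0_tends0 (R : realType) (f : nat -> \bar R) :
  f n @[n --> \oo] --> 0%E -> tends0 f.
Proof.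
move=> /fine_cvgP [ffin /cvgrPdist_le fc] e e0.
have := fc e e0; apply: filterS2 ffin => n fn.
rewrite sub0r normrN => H; rewrite -(fineK fn) lee_fin.
exact: le_trans (ler_norm _) H.
Qed.

Lemma tends0_cvg0 (R : realType) (f : nat -> \bar R) :
  (forall n, 0 <= f n)%E -> tends0 f -> f n @[n --> \oo] --> 0%E.
Proof.
move=> f0 ft; apply/fine_cvgP; split.
  have := ft 1 ltr01; apply: filterS => n fn.
  by rewrite ge0_fin_numE ?(le_lt_trans fn) ?ltry.
apply/cvgrPdist_le => e e0; have := ft e e0; apply: filterS => n fn.
rewrite sub0r normrN /=.
have fin : f n \is a fin_num by rewrite ge0_fin_numE ?(le_lt_trans fn) ?ltry.
rewrite ger0_norm; first by rewrite -lee_fin fineK.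
by rewrite -lee_fin fineK.
Qed.

Lemma bm_mul dX (X : measurableType dX) (R : realType) (F G : X -> R) :
  bm F -> bm G -> bm (fun z => F z * G z).
Proof.
move=> [mF [c Fc]] [mG [c' Gc]]; split; first exact: measurable_funM.
exists (c * c') => x; rewrite normrM; apply: ler_pM => //.
Qed.

Lemma bm_add dX (X : measurableType dX) (R : realType) (F G : X -> R) :
  bm F -> bm G -> bm (fun z => F z + G z).
Proof.
move=> [mF [c Fc]] [mG [c' Gc]]; split; first exact: measurable_funD.
by exists (c + c') => x; apply: le_trans (ler_normD _ _) _; apply: lerD.
Qed.

Lemma bm_cst dX (X : measurableType dX) (R : realType) (k : R) :
  bm (fun _ : X => k).
Proof. by split; [exact: measurable_cst| exists `|k|]. Qed.

Lemma bm_indic dX (X : measurableType dX) (R : realType) (D : set X) :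
  measurable D -> bm (\1_D : X -> R).
Proof.
move=> mD; split; first exact: measurable_indic.
by exists 1 => x; rewrite indicE; case: (x \in D); rewrite ?normr1 ?normr0.
Qed.

Section PrSection.
Context dX (X : measurableType dX) (R : realType) (P : probability (X * X)%type R).
Context (V : nat -> X * X -> R).
Hypothesis mV : forall n, measurable_fun setT (V n).
Hypothesis V1 : forall n z, `|V n z| <= 1.
Hypothesis V0 : tends0 (fun n => cut P (V n)).

Let bmV n : bm (V n).
Proof. by split => //; exists 1. Qed.

Definition Pr (G : X * X -> R) :=
  bm G /\ tends0 (fun n => cut P (fun z => G z * V n z)).

Lemma Pr_ext G G' : Pr G -> G =1 G' -> Pr G'.
Proof. by move=> PG /funext <-. Qed.

Lemma Pr_add G G' : Pr G -> Pr G' -> Pr (fun z => G z + G' z).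
Proof.
move=> [bG tG] [bG' tG']; split; first exact: bm_add.
move=> e e0.
have e20 : 0 < e / 2 by rewrite divr_gt0.
have := tG _ e20; have := tG' _ e20; apply: filterS2 => n h1 h2.
rewrite (_ : (fun z => _) = (fun z => G z * V n z + G' z * V n z)%R); last first.
  by apply/funext => z; rewrite mulrDl.
apply: le_trans (cut_add _ _ _) _; try exact: bm_mul.
by rewrite [e]splitr EFinD; apply: leeD.
Qed.

Lemma Pr_scale G k : Pr G -> Pr (fun z => k * G z).
Proof.
move=> [bG tG]; split; first exact: (bm_mul (bm_cst _ k)).
move=> e e0.
have ke0 : 0 < e / (`|k| + 1) by rewrite divr_gt0 // ltr_wpDl.
have := tG _ ke0; apply: filterS => n h.
rewrite (_ : (fun z => _) = (fun z => k * (G z * V n z))%R); last first.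
  by apply/funext => z; rewrite mulrA.
apply: le_trans (cut_scale _ _ _) _; first exact: bm_mul.
apply: le_trans (lee_wpmul2l _ h) _ => //.
rewrite -EFinM lee_fin mulrC -mulrA ger_pMr //.
by rewrite mulrC ler_pdivrMr ?mul1r ?lerDl // ltr_wpDl.
Qed.

Lemma Pr_unif G : bm G ->
  (forall d : R, 0 < d -> exists G', Pr G' /\ forall z, `|G z - G' z| <= d) ->
  Pr G.
Proof.
move=> bG H; split => // e e0.
have e20 : 0 < e / 2 by rewrite divr_gt0.
have [G' [[bG' tG'] GG']] := H _ e20.
have := tG' _ e20; apply: filterS => n h.
rewrite (_ : (fun z => _) =
  (fun z => G' z * V n z + (G z - G' z) * V n z)%R); last first.
  by apply/funext => z; rewrite -mulrDl addrC subrK.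
apply: le_trans (cut_add _ _ _) _; try apply: bm_mul => //.
  apply: bm_add => //; move: (bm_mul (bm_cst _ (-1)) bG'); congr bm.
  by apply/funext => z; rewrite mulN1r.
rewrite [e]splitr EFinD; apply: leeD => //.
apply: cut_le; [|exact: ltW|].
  apply: measurable_funM => //; apply: measurable_funB => //.
  - by case: bG.
  - by case: bG'.
move=> z; rewrite normrM -[e / 2]mulr1; apply: ler_pM => //.
Qed.

Lemma Pr_one : Pr (fun _ => 1).
Proof.
split; first exact: bm_cst.
by apply: (eq_ind _ (fun f => tends0 f) V0); apply/funext => n; congr cut;
  apply/funext => z; rewrite mul1r.
Qed.

Lemma Pr_rect A0 B0 : measurable A0 -> measurable B0 -> Pr (\1_(A0 `*` B0)).
Proof.
move=> mA mB; split; first by apply: bm_indic; exact: measurableX.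
move=> e e0; have := V0 e0; apply: filterS => n h.
by apply: (le_trans _ h); exact: cut_rect.
Qed.

Lemma Pr_compl S : measurable S -> Pr (\1_S) -> Pr (\1_(~` S)).
Proof.
move=> mS PS; apply: Pr_ext (Pr_add Pr_one (Pr_scale (-1) PS)) _ => z.
rewrite !indicE in_setC; case: (z \in S) => /=; rewrite ?mulr1 ?mulr0 ?subrr ?addr0 //.
Qed.

End PrSection.

Lemma indicU_disj (T : Type) (R : realType) (A B : set T) (z : T) :
  A `&` B = set0 -> (\1_(A `|` B) z : R) = \1_A z + \1_B z.
Proof.
move=> AB; rewrite !indicE in_setU.
case: (boolP (z \in A)) => zA; case: (boolP (z \in B)) => zB //=;
  rewrite ?addr0 ?add0r //.
by move: zA zB; rewrite !inE => zA zB; have : (A `&` B) z by []; rewrite AB.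
Qed.

Section PrSection2.
Context dX (X : measurableType dX) (R : realType) (P : probability (X * X)%type R).
Context (V : nat -> X * X -> R).
Hypothesis mV : forall n, measurable_fun setT (V n).
Hypothesis V1 : forall n z, `|V n z| <= 1.
Hypothesis V0 : tends0 (fun n => cut P (V n)).

Lemma Pr_bigcup (F : nat -> set (X * X)) : (forall n, measurable (F n)) ->
  trivIset setT F -> (forall n, Pr P V (\1_(F n))) ->
  Pr P V (\1_(\bigcup_n F n)).
Proof.
move=> mF tF PF.
set E := \bigcup_n F n.
have mE : measurable E by exact: bigcup_measurable.
pose S k := \bigcup_(i < k) F i.
have mS k : measurable (S k) by apply: bigcup_measurable => i _.
have SE k : S k `<=` E by move=> z [i _ Fiz]; exists i.
have Srec k : S k.+1 = S k `|` F k.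
  rewrite /S !bigcup_mkord big_ord_recr //.
have SFk k : S k `&` F k = set0.
  apply/seteqP; split => // z [[i /= ik Fiz] Fkz].
  have ik' : i = k by apply: tF => //; exists z.
  by rewrite ik' ltnn in ik.
have PS k : Pr P V (\1_(S k)).
  elim: k => [|k IH].
    apply: (Pr_ext (Pr_scale mV V1 0 (Pr_one V0))) => z.
    rewrite mul0r indicE (_ : z \in S 0 = false) //.
    by apply/negbTE; rewrite notin_setE => -[i /= + _]; rewrite ltn0.
  rewrite Srec; apply: (Pr_ext (Pr_add mV V1 IH (PF k))) => z.
  by rewrite indicU_disj.
pose D k := E `\` S k.
have mD k : measurable (D k) by exact: measurableD.
have Dcvg : (P \o D) k @[k --> \oo] --> (P (\bigcap_k D k)).
  apply: nonincreasing_cvg_mu => //.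
  - by rewrite (le_lt_trans (probability_le1 _ (mD 0))) // ltry.
  - by apply: bigcap_measurable => [|k _]; first by exists 0%N.
  - move=> n m nm; apply/subsetPset => z [Ez nSm]; split => //.
    by move=> [i /= ilt Fiz]; apply: nSm; exists i => //=; exact: leq_trans ilt nm.
have D0 : \bigcap_k D k = set0.
  apply/seteqP; split => // z Dz.
  have [i _ Fiz] : E z by have [] := Dz 0%N I.
  have [_] := Dz i.+1 I; apply; exists i => //=.
rewrite D0 measure0 in Dcvg.
split; first by apply: bm_indic.
move=> e e0.
have e20 : 0 < e / 2 by rewrite divr_gt0.
have [k0 _ Hk0] := cvg0_tends0 Dcvg e20.
have Dk0 : (P (D k0) <= (e / 2)%:E)%E by exact: (Hk0 k0 (leqnn k0)).
have [_ tS] := PS k0.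
have := tS _ e20; apply: filterS => n h.
rewrite (_ : (fun z => _) = (fun z => \1_(S k0) z * V n z + \1_(D k0) z * V n z)%R); last first.
  apply/funext => z; rewrite -mulrDl -indicU_disj; last first.
    by apply/seteqP; split => // x [Sx [_ nSx]].
  congr (_ * _); congr (\1_ _ z); apply/seteqP; split => x.
    by move=> Ex; have [Sx|nSx] := pselect (S k0 x); [left|right].
  by case => [/SE|[]].
apply: le_trans (cut_add _ _ _) _; try apply: bm_mul => //; try exact: bm_indic.
  by split => //; exists 1.
  by split => //; exists 1.
rewrite [e]splitr EFinD; apply: leeD => //.
exact: le_trans (cut_indic_le _ _ _ _) Dk0.
Qed.

End PrSection2.

Section PrSection3.
Context dX (X : measurableType dX) (R : realType) (P : probability (X * X)%type R).
Context (V : nat -> X * X -> R).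
Hypothesis mV : forall n, measurable_fun setT (V n).
Hypothesis V1 : forall n z, `|V n z| <= 1.
Hypothesis V0 : tends0 (fun n => cut P (V n)).

Lemma Pr_indic_all (S : set (X * X)) : measurable S -> Pr P V (\1_S).
Proof.
move=> mS.
have := @dynkin_induction _ _ [set A `*` B | A in measurable & B in measurable]
  (fun S => Pr P V (\1_S)).
apply => //.
- exact: measurable_prod_measurableType.
- move=> _ _ [A1 mA1 [A2 mA2 <-]] [B1 mB1 [B2 mB2 <-]].
  rewrite -setXI; exists (A1 `&` B1); first exact: measurableI.
  by exists (A2 `&` B2) => //; exact: measurableI.
- by apply: (Pr_ext (Pr_one V0)) => z; rewrite indicT.
- by move=> _ [A mA [B mB <-]]; exact: Pr_rect.
- by move=> S0 mS0 PS0; exact: Pr_compl.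
- by move=> F mF tF PF; exact: Pr_bigcup.
- by rewrite -measurable_prod_measurableType.
Qed.

End PrSection3.

Fixpoint rr (T : Type) (R : realType) (H : T -> R) (k : nat) : T -> R :=
  match k with
  | 0 => H
  | k'.+1 => fun z => rr H k' z - (2 ^+ k'.+1)^-1 *
      \1_[set w | (2 ^+ k'.+1)^-1 <= rr H k' w] z
  end.

Lemma rr_meas dX (X : measurableType dX) (R : realType) (H : X -> R) k :
  measurable_fun setT H -> measurable_fun setT (rr H k).
Proof.
move=> mH; elim: k => [//|k IH] /=.
apply: measurable_funB => //; apply: measurable_funM => //.
apply: measurable_indic.
rewrite (_ : [set w | _] = rr H k @^-1` `[(2 ^+ k.+1)^-1, +oo[).
  by rewrite -[_ @^-1` _]setTI; apply: IH => //; exact: measurable_itv.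
by apply/seteqP; split => w /=; rewrite in_itv /= andbT.
Qed.

Lemma rr_bound (T : Type) (R : realType) (H : T -> R) k z :
  0 <= H z <= 1 -> 0 <= rr H k z <= (2 ^+ k)^-1.
Proof.
move=> Hz; elim: k => [|k IH] /=; first by rewrite expr0 invr1.
move: IH => /andP[r0 r1].
set c := (2 ^+ k.+1)^-1.
have c2 : (2 ^+ k)^-1 = c + c.
  by rewrite /c exprS invfM mulrC -splitr.
rewrite indicE; case: (boolP (z \in _)) => /=.
  rewrite inE /= => cr; rewrite mulr1 subr_ge0 cr /=.
  by rewrite lerBlDr -c2.
rewrite notin_setE /= => /negP; rewrite -ltNge => rc.
by rewrite mulr0 subr0 r0 ltW.
Qed.

Section PrSection4.
Context dX (X : measurableType dX) (R : realType) (P : probability (X * X)%type R).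
Context (V : nat -> X * X -> R).
Hypothesis mV : forall n, measurable_fun setT (V n).
Hypothesis V1 : forall n z, `|V n z| <= 1.
Hypothesis V0 : tends0 (fun n => cut P (V n)).

Lemma Pr_fun (H : X * X -> R) : measurable_fun setT H ->
  (forall z, 0 <= H z <= 1) -> Pr P V H.
Proof.
move=> mH H01.
have PG k : Pr P V (fun z => H z - rr H k z).
  elim: k => [|k IH].
    apply: (Pr_ext (Pr_scale mV V1 0 (Pr_one V0))) => z.
    by rewrite mul0r /= subrr.
  pose c : R := (2 ^+ k.+1)^-1.
  have mE : measurable [set w | c <= rr H k w].
    rewrite (_ : [set w | _] = rr H k @^-1` `[c, +oo[).
      rewrite -[_ @^-1` _]setTI; apply: (rr_meas k mH measurableT).
      exact: measurable_itv.
    by apply/seteqP; split => w /=; rewrite in_itv /= andbT.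
  apply: (Pr_ext (Pr_add mV V1 IH (Pr_scale mV V1 c (Pr_indic_all mV V1 V0 mE)))).
  by move=> z /=; rewrite opprB addrA [RHS]addrAC.
apply: Pr_unif => //.
  by split => //; exists 1 => z; have /andP[h0 h1] := H01 z; rewrite ger0_norm.
move=> d d0.
have [k kd] : exists k, (2 ^+ k)^-1 <= d.
  exists (Num.Def.archi_bound d^-1).
  have := @upper_nthrootP R d^-1 _ (leqnn _).
  by rewrite invf_plt ?posrE ?exprn_gt0 ?invr_gt0 // => /ltW.
exists (fun z => H z - rr H k z); split => // z.
rewrite opprB addrC subrK; have /andP[r0 r1] := rr_bound k (H01 z).
by rewrite ger0_norm // (le_trans r1 kd).
Qed.

End PrSection4.

Unset Implicit Arguments.

Theorem lemma2p9 (R : realType) (d : measure_display) (T : measurableType d)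
  (nu : probability T R)
  (Hborel : borel_space T R) (Hatomless : atomless nu)
  (Wn : nat -> T * T -> R) (W U : T * T -> R)
  (HWn : forall n, graphon (Wn n)) (HW : graphon W)
  (Hcvg : cutnorm nu (fun z => Wn n z - W z) @[n --> \oo] --> 0%E)
  (HU : graphon U) (HUW : forall z, U z <= W z) :
  exists Un : nat -> T * T -> R,
    [/\ forall n, graphon (Un n),
        forall n z, Un n z <= Wn n z
      & cutnorm nu (fun z => Un n z - U z) @[n --> \oo] --> 0%E].
Proof.
case: HW => mW sW bW; case: HU => mU sU bU.
pose H z := U z / W z.
have mH : measurable_fun setT H.
  apply: measurable_funM => //; apply: measurableT_comp => //.
  exact: measurable_inv.
have HUeq z : U z = H z * W z.
  rewrite /H /=; have [W0|W0] := eqVneq (W z) 0.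
    have /andP[U0 _] := bU z; have := HUW z; rewrite W0 => U0'.
    by rewrite mulr0; apply/le_anti/andP.
  by rewrite mulfVK.
have H01 z : 0 <= H z <= 1.
  rewrite /H /=; have [W0|W0] := eqVneq (W z) 0.
    by rewrite W0 invr0 mulr0 lexx ler01.
  have /andP[U0 _] := bU z; have /andP[Wz0 _] := bW z.
  have Wp : 0 < W z by rewrite lt_def W0.
  by rewrite divr_ge0 //= ler_pdivrMr // mul1r.
exists (fun n z => H z * Wn n z); split.
- move=> n; case: (HWn n) => mWn sWn bWn; split.
  + exact: measurable_funM.
  + by move=> x y; rewrite sWn /H sU sW.
  + move=> z; have /andP[h0 h1] := H01 z; have /andP[w0 w1] := bWn z.
    by rewrite mulr_ge0 //= mulr_ile1.
- move=> n z; have /andP[h0 h1] := H01 z; case: (HWn n) => _ _ /(_ z) /andP[w0 _].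
  exact: ler_piMl.
- pose V n z := Wn n z - W z.
  have mV n : measurable_fun setT (V n).
    by apply: measurable_funB => //; case: (HWn n).
  have V1 n z : `|V n z| <= 1.
    case: (HWn n) => _ _ /(_ z) /andP[w0 w1]; have /andP[v0 v1] := bW z.
    rewrite /V ler_norml; apply/andP; split; lra.
  have V0 : tends0 (fun n => cut (nu \x nu)%E (V n)) by exact: cvg0_tends0.
  have [_ t] := Pr_fun (P := (nu \x nu)%E) mV V1 V0 mH H01.
  apply: tends0_cvg0 => [n|]; first exact: cut_ge0.
  move=> e e0; have := t e e0; apply: filterS => n.
  suff -> : (fun z => H z * Wn n z - U z) = (fun z => H z * V n z) by [].
  by apply/funext => z; rewrite HUeq /V mulrBr.
Qed.
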